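(* In the blowup/base-change setting below, fix $p\in\{0,\dots,P-1\}$ and suppose that there are no special fibers at $B^{p,p+1}$, i.e. $\Delta'$ contains a monomial not divisible by $e_p$ nor by $e_{p+1}$. Then for every positive integer $k$: (1) $\bar n_{kp+r}=(k-r)\,n_p+r\,n_{p+1}$ for $r=0,1,\dots,k$; (2) there are no special fibers at $\bar B^{\bar p,\bar p+1}$ for any $\bar p=kp,\dots,k(p+1)-1$.
   Context: Blowup setting. Let $f=f(s,t;u)$, $g=g(s,t;u)$ be complex polynomials, homogeneous in $(s,t)$ of degrees $8$ and $12$, defining a family of Weierstrass models $y^2=x^3+fxz^4+gz^6$ over $\mathbb P^1_{[s:t]}$ with parameter $u$; $\Delta:=4f^3+27g^2$. Let $a,b$ be the vanishing orders in $s$ at $s=0$ of $f,g$ for generic $u\ne0$ (not both $a\ge4$, $b\ge6$), and write $f=s^a\sum_i\mathcal F_i\,s^it^{8-a-i}$, $g=s^b\sum_j\mathcal G_j\,s^jt^{12-b-j}$. Assume the 3-fold vanishing orders of $(f,g,\Delta)$ at $(u,s)=(0,0)$ (largest $N$ with the function in $(u,s)^N$, $t=1$) are $(4+\alpha,6+\beta,12+\gamma)$ with $\alpha=0$ or $\beta=0$, and that this persists under all base changes $u\mapsto u^\ell$ (Classes 1–4). Blowup chain: $e_0:=u$; the $p$-th blowup substitutes $e_{p-1}\mapsto e_{p-1}e_p$, $s\mapsto se_p$ and divides $f,g,\Delta$ by $e_p^4,e_p^6,e_p^{12}$; $\mu_{q,i}$, $\nu_{q,j}$ are the vanishing orders in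 $e_q$ of the coefficients $\mathcal F_i(e_0,\dots)$, $\mathcal G_j(e_0,\dots)$; $P$ is the first number of blowups for which some $i<4-a$ with $\mathcal F_i\neq0$ has $\mu_{P,i}<4-a-i$ or some $j<6-b$ with $\mathcal G_j\ne0$ has $\nu_{P,j}<6-b-j$. Standing assumption: there is such an $i$ with $\mu_{P,i}=0$ or such a $j$ with $\nu_{P,j}=0$ (achievable by a preliminary base change). Base components $B^p=\{e_p=0\}$ form a chain, $B^{p,p+1}=\{e_p=e_{p+1}=0\}$. $n_p$ is the largest power of $e_p$ dividing $\Delta$ and $\Delta=\prod_qe_q^{n_q}\Delta'$. There is a special fiber at $B^{p,p+1}$ iff $\Delta'$ vanishes there, i.e. every monomial of $\Delta'$ is divisible by $e_p$ or $e_{p+1}$. Base change: for a positive integer $k$, the barred configuration $\bar{\mathcal Y}$ is obtained by substituting $u\mapsto u^k$ in $f,g$ and then performing the blowup chain, which now consists of $\bar P=kP$ blowups with coordinates $\bar e_0,\dots,\bar e_{\bar P}$; $\bar B^{\bar p}$, $\bar B^{\bar p,\bar p+1}$, $\bar n_{\bar p}$, $\bar\Delta'$ are defined analogously. *)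

(* Defs.v *)
From HB Require Import structures.
From mathcomp Require Import all_boot all_order all_algebra.
From mathcomp.multinomials Require Import mpoly.
Set Implicit Arguments. Unset Strict Implicit. Unset Printing Implicit Defensive.
Import Order.TTheory GRing.Theory Num.Theory.
Local Open Scope ring_scope.

(* Original polynomials live in {mpoly C[3]}: variable 0 = s, 1 = t, 2 = u.
   After m blowups, the (numerator of the) transformed polynomial lives in
   {mpoly C[m.+3]}: variable 0 = s, 1 = t, q.+2 = e_q  (q = 0..m). *)

Section Defs.
Variable C : numClosedFieldType.

Definition vs : 'I_3 := ord0.
Definition vt : 'I_3 := inord 1.
Definition vu : 'I_3 := inord 2.

Definition disc (f g : {mpoly C[3]}) : {mpoly C[3]} := 4%:R * f ^+ 3 + 27%:R * g ^+ 2.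

Definition bc (k : nat) (h : {mpoly C[3]}) : {mpoly C[3]} :=
  h \mPo [tuple 'X_vs; 'X_vt; 'X_vu ^+ k].

Definition ev (m q : nat) : 'I_(m.+3) := inord q.+2.
Definition ss (m : nat) : 'I_(m.+3) := ord0.
Definition tt_ (m : nat) : 'I_(m.+3) := inord 1.

(* The blowup chain of m blowups (e_0 := u; the p-th blowup substitutes
   e_{p-1} -> e_{p-1} e_p, s -> s e_p).  Composing the m substitutions gives
   s -> s * prod_q e_q^q, t -> t, u -> prod_q e_q.  The transformed polynomial
   is [chain_num m h] divided by prod_q e_q^(w*q), where w = 4, 6, 12 for
   f, g, Delta (the divisions by e_p^w, transported by later substitutions). *)
Definition chain_num (m : nat) (h : {mpoly C[3]}) : {mpoly C[m.+3]} :=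
  h \mPo [tuple 'X_(ss m) * \prod_(q < m.+1) 'X_(ev m q) ^+ q;
                'X_(tt_ m);
                \prod_(q < m.+1) 'X_(ev m q)].

Definition seqmin (s : seq nat) : nat := if s is x :: s' then foldr minn x s' else 0%N.

Definition mval n (p : {mpoly C[n]}) (i : 'I_n) : nat :=
  seqmin [seq (mon : 'X_{1..n}) i | mon <- msupp p].

(* same, restricted to the monomials of s-degree j, i.e. for the coefficient
   of s^j (as a polynomial in the other variables) *)
Definition mvalS n (p : {mpoly C[n]}) (sv : 'I_n) (j : nat) (i : 'I_n) : nat :=
  seqmin [seq (mon : 'X_{1..n}) i | mon <- msupp p & (mon : 'X_{1..n}) sv == j].

(* vanishing order in e_q of a transformed polynomial of weight w after m blowups *)
Definition vord (w m : nat) (h : {mpoly C[3]}) (q : nat) : int :=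
  (mval (chain_num m h) (ev m q))%:Z - (w * q)%:Z.

Definition nord (m : nat) (D : {mpoly C[3]}) (q : nat) : int := vord 12 m D q.

(* Delta' = Delta / prod_q e_q^(n_q) = chain_num / prod_q e_q^(mval) *)
Definition dprime (m : nat) (D : {mpoly C[3]}) : {mpoly C[m.+3]} :=
  let N := chain_num m D in
  let V := [multinom (if (2 <= i)%N then mval N i else 0%N) | i < m.+3] in
  \sum_(mon <- msupp N) N@_mon *: 'X_[(mon - V)%MM].

Definition special_fiber (m : nat) (D : {mpoly C[3]}) (p : nat) : bool :=
  all (fun mon : 'X_{1..m.+3} => (0 < mon (ev m p)) || (0 < mon (ev m p.+1)))%N
      (msupp (dprime m D)).

(* coefficient of s^j (F_i with j = a + i) is nonzero *)
Definition coef_nz (h : {mpoly C[3]}) (j : nat) : bool :=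
  has (fun mon : 'X_{1..3} => mon vs == j) (msupp h).

(* mu_{m,i} (w = 4) / nu_{m,j} (w = 6): vanishing order in e_m of the
   coefficient of s^j after m blowups *)
Definition cord (w m : nat) (h : {mpoly C[3]}) (j : nat) : int :=
  (mvalS (chain_num m h) (ss m) j (ev m m))%:Z - (w * m)%:Z.

Definition Pcond (f g : {mpoly C[3]}) (m : nat) : Prop :=
  (exists j, (j < 4)%N /\ coef_nz f j /\ cord 4 m f j < (4 - j)%:Z) \/
  (exists j, (j < 6)%N /\ coef_nz g j /\ cord 6 m g j < (6 - j)%:Z).

(* membership in (u,s)^N at t = 1 *)
Definition inI (h : {mpoly C[3]}) (N : nat) : bool :=
  all (fun mon : 'X_{1..3} => (N <= mon vs + mon vu)%N) (msupp h).
Definition ord3_eq (h : {mpoly C[3]}) (N : nat) : Prop := inI h N /\ ~~ inI h N.+1.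

Definition class14 (f g : {mpoly C[3]}) : Prop :=
  exists alpha beta gamma : nat,
    ord3_eq f (4 + alpha) /\ ord3_eq g (6 + beta) /\ ord3_eq (disc f g) (12 + gamma)
    /\ (alpha = 0%N \/ beta = 0%N).

Definition homog_st (h : {mpoly C[3]}) (d : nat) : bool :=
  all (fun mon : 'X_{1..3} => mon vs + mon vt == d)%N (msupp h).

Definition s_ord_ge (h : {mpoly C[3]}) (N : nat) : bool :=
  all (fun mon : 'X_{1..3} => (N <= mon vs)%N) (msupp h).

End Defs.

(* Main.v *)
Require Import Defs.
From HB Require Import structures.
From mathcomp Require Import all_boot all_order all_algebra.
From mathcomp.multinomials Require Import mpoly.
From mathcomp Require Import zify ring.
Import Order.TTheory GRing.Theory Num.Theory.
Local Open Scope ring_scope.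

Lemma foldr_min_spec (x : nat) s :
  (forall y, y \in x :: s -> (foldr minn x s <= y)%N) /\ foldr minn x s \in x :: s.
Proof.
elim: s => [|z s [IH1 IH2]] /=.
  by split; [move=> y; rewrite inE => /eqP-> | rewrite inE eqxx].
split.
  move=> y; rewrite !inE => /or3P [/eqP->|/eqP->|Hy].
  - apply: leq_trans (geq_minr _ _) (IH1 _ _); by rewrite inE eqxx.
  - exact: geq_minl.
  - apply: leq_trans (geq_minr _ _) (IH1 _ _); by rewrite inE Hy orbT.
rewrite /minn; case: ifP => _; first by rewrite !inE eqxx orbT.
by move: IH2; rewrite !inE => /orP [->|->] //; rewrite !orbT.
Qed.

Lemma seqmin_le s y : y \in s -> (seqmin s <= y)%N.
Proof. by case: s => // x s; exact: (foldr_min_spec x s).1. Qed.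

Lemma seqmin_mem x s : seqmin (x :: s) \in x :: s.
Proof. exact: (foldr_min_spec x s).2. Qed.

Lemma seqmin_char s v : v \in s -> (forall y, y \in s -> (v <= y)%N) -> seqmin s = v.
Proof.
case: s => // x s Hv Hall; apply/eqP; rewrite eqn_leq seqmin_le //.
by rewrite Hall // seqmin_mem.
Qed.

Lemma seqmin_eq_mem s1 s2 : s1 =i s2 -> seqmin s1 = seqmin s2.
Proof.
case: s1 => [|x s1] H.
  case: s2 H => // y s2 H; by move: (H y); rewrite in_nil mem_head.
symmetry; apply: seqmin_char; first by rewrite -H seqmin_mem.
by move=> y; rewrite -H; apply: seqmin_le.
Qed.

Lemma mcZ (R : nzRingType) n (c : R) (p : {mpoly R[n]}) m : mcoeff m (c *: p) = c * mcoeff m p.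
Proof. exact: mcoeffZ. Qed.

Section MP.
Variable C : nzRingType.


Definition sumform {n k} (h : {mpoly C[n]}) (F : 'X_{1..n} -> 'X_{1..k}) : {mpoly C[k]} :=
  \sum_(m <- msupp h) h@_m *: 'X_[F m].

Lemma coefZX k (c : C) (mm k0 : 'X_{1..k}) :
  mcoeff k0 (c *: @mpolyX k C mm) = c * (mm == k0)%:R.
Proof.
transitivity (c * mcoeff k0 ('X_[mm] : {mpoly C[k]})); first exact: mcoeffZ.
by rewrite mcoeffX.
Qed.

Lemma sumform_coef n k (h : {mpoly C[n]}) (F : 'X_{1..n} -> 'X_{1..k}) m0 :
  {in msupp h &, injective F} -> m0 \in msupp h ->
  mcoeff (F m0) (sumform h F) = mcoeff m0 h.
Proof.
move=> inj Hm0; rewrite /sumform raddf_sum (bigD1_seq m0) ?msupp_uniq //=.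
rewrite coefZX eqxx mulr1 big_seq_cond big1 ?addr0 // => m /andP [Hm Hne].
rewrite coefZX; case: eqP => [/inj E|]; last by rewrite mulr0.
by rewrite E ?eqxx in Hne.
Qed.

Lemma sumform_coef0 n k (h : {mpoly C[n]}) (F : 'X_{1..n} -> 'X_{1..k}) k0 :
  k0 \notin map F (msupp h) -> mcoeff k0 (sumform h F) = 0.
Proof.
move=> H; rewrite /sumform raddf_sum big1_seq // => m Hm.
rewrite /= coefZX; case: eqP => [E|]; last by rewrite mulr0.
by rewrite -E map_f in H.
Qed.

Lemma mem_sumform n k (h : {mpoly C[n]}) (F : 'X_{1..n} -> 'X_{1..k}) :
  {in msupp h &, injective F} -> msupp (sumform h F) =i map F (msupp h).
Proof.
move=> inj k0; rewrite mcoeff_msupp.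
case: (boolP (k0 \in map F _)) => [/mapP [m Hm ->]|H].
  by rewrite sumform_coef // -mcoeff_msupp.
by rewrite sumform_coef0 // eqxx.
Qed.

Lemma prod_monoE n k (lq : n.-tuple {mpoly C[k]}) (w : 'I_n -> 'X_{1..k}) (m : 'X_{1..n}) :
  (forall i, tnth lq i = 'X_[w i]) ->
  \prod_(i < n) tnth lq i ^+ m i = 'X_[\sum_(i < n) w i *+ m i].
Proof.
move=> H; rewrite (big_morph (mpolyX C) (@mpolyXD _ _) (@mpolyX0 _ _)).
by apply: eq_bigr => i _; rewrite H mpolyXn.
Qed.

Definition img {n k} (w : 'I_n -> 'X_{1..k}) (m : 'X_{1..n}) : 'X_{1..k} :=
  (\sum_(i < n) w i *+ m i)%MM.

Lemma comp_monoE n k (h : {mpoly C[n]}) (lq : n.-tuple {mpoly C[k]}) w :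
  (forall i, tnth lq i = 'X_[w i]) -> h \mPo lq = sumform h (img w).
Proof.
by move=> H; rewrite comp_mpolyE; apply: eq_bigr => m _; rewrite (@prod_monoE _ _ _ _ m H).
Qed.

Lemma sumform_comp n k l (h : {mpoly C[n]}) (F : 'X_{1..n} -> 'X_{1..k})
   (lq : k.-tuple {mpoly C[l]}) w :
  (forall i, tnth lq i = 'X_[w i]) ->
  (sumform h F) \mPo lq = sumform h (fun m => img w (F m)).
Proof.
move=> H; rewrite /sumform raddf_sum; apply: eq_bigr => m _.
by rewrite /= linearZ /= comp_mpolyX (@prod_monoE _ _ _ _ _ H).
Qed.

Lemma imgE n k (w : 'I_n -> 'X_{1..k}) m j :
  (img w m : 'X_{1..k}) j = (\sum_(i < n) (w i : 'X_{1..k}) j * m i)%N.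
Proof. by rewrite /img mnm_sumE; apply: eq_bigr => i _; rewrite mulmnE. Qed.

End MP.
Arguments sumform {C n k}.

Section MV.
Variable C : numClosedFieldType.
Lemma mval_sumform n k (h : {mpoly C[n]}) (F : 'X_{1..n} -> 'X_{1..k}) i :
  {in msupp h &, injective F} ->
  mval (sumform h F) i = seqmin [seq (F m : 'X_{1..k}) i | m <- msupp h].
Proof.
move=> inj; rewrite /mval; apply: seqmin_eq_mem => y.
apply/mapP/mapP => [[mon Hmon ->]|[m Hm ->]].
  by rewrite mem_sumform // in Hmon; case/mapP: Hmon => m Hm ->; exists m.
by exists (F m) => //; rewrite mem_sumform // map_f.
Qed.

End MV.



Lemma val_tt M : nat_of_ord (tt_ M) = 1%N. Proof. by rewrite /tt_ inordK. Qed.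
Lemma val_ev M q : (q <= M)%N -> nat_of_ord (ev M q) = q.+2. Proof. by move=> H; rewrite /ev inordK. Qed.
Lemma val_vt : nat_of_ord vt = 1%N. Proof. by rewrite /vt inordK. Qed.
Lemma val_vu : nat_of_ord vu = 2%N. Proof. by rewrite /vu inordK. Qed.

Lemma sum3 (F : 'I_3 -> nat) : (\sum_(i < 3) F i = F vs + F vt + F vu)%N.
Proof.
rewrite !big_ord_recl big_ord0 addn0 addnA; congr (_ + _ + _); apply: congr1;
  apply: val_inj => /=; by rewrite ?val_vt ?val_vu.
Qed.

Lemma ord3 (i : 'I_3) : [\/ i = vs, i = vt | i = vu].
Proof.
case: i => [[|[|[|//]]] Hi]; [apply: Or31|apply: Or32|apply: Or33];
  apply: val_inj => /=; by rewrite ?val_vt ?val_vu.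
Qed.


Lemma sum_delta M q (G : nat -> nat) : (q <= M)%N ->
  (\sum_(x < M.+1) (((x : nat) == q) * G x) = G q)%N.
Proof.
move=> Hq; have Hq' : (q < M.+1)%N by [].
rewrite (bigD1 (Ordinal Hq')) //= eqxx mul1n big1 ?addn0 // => x Hx.
case: eqP => [E|]; last by rewrite mul0n.
by move/eqP: Hx; case; apply: val_inj.
Qed.

Lemma sum_zero M (G : 'I_M.+1 -> nat) : (forall x, G x = 0%N) -> (\sum_(x < M.+1) G x = 0)%N.
Proof. by move=> H; rewrite big1. Qed.

Definition wC (M : nat) (i : 'I_3) : 'X_{1..M.+3} :=
  if val i == 0%N then (U_(ss M) + \sum_(q < M.+1) U_(ev M q) *+ q)%MM
  else if val i == 1%N then U_(tt_ M)%MM else (\sum_(q < M.+1) U_(ev M q))%MM.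

Definition wB (k : nat) (i : 'I_3) : 'X_{1..3} :=
  if val i == 0%N then U_(vs)%MM
  else if val i == 1%N then U_(vt)%MM else (U_(vu) *+ k)%MM.

Section S.
Variable C : numClosedFieldType.

Lemma tC_nth M i :
  tnth [tuple 'X_(ss M) * \prod_(q < M.+1) 'X_(ev M q) ^+ q; 'X_(tt_ M);
          \prod_(q < M.+1) 'X_(ev M q)] i = 'X_[wC M i] :> {mpoly C[M.+3]}.
Proof.
case: i => [[|[|[|//]]] Hi]; rewrite (tnth_nth 0) /= /wC /=.
- rewrite mpolyXD (big_morph (mpolyX C) (@mpolyXD _ _) (@mpolyX0 _ _)); congr (_ * _).
  by apply: eq_bigr => q _; rewrite mpolyXn.
- by [].
- by rewrite (big_morph (mpolyX C) (@mpolyXD _ _) (@mpolyX0 _ _)).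
Qed.

Lemma tB_nth k i :
  tnth [tuple 'X_vs; 'X_vt; 'X_vu ^+ k] i = 'X_[wB k i] :> {mpoly C[3]}.
Proof.
case: i => [[|[|[|//]]] Hi]; rewrite (tnth_nth 0) /= /wB /= //.
by rewrite mpolyXn.
Qed.

Lemma chain_sf M (h : {mpoly C[3]}) : chain_num M h = sumform h (img (wC M)).
Proof. by apply: comp_monoE => i; apply: tC_nth. Qed.

Lemma bc_sf k (h : {mpoly C[3]}) : bc k h = sumform h (img (wB k)).
Proof. by apply: comp_monoE => i; apply: tB_nth. Qed.

Lemma chain_bc_sf M k (h : {mpoly C[3]}) :
  chain_num M (bc k h) = sumform h (fun m => img (wC M) (img (wB k) m)).
Proof. by rewrite bc_sf /chain_num; apply: sumform_comp => i; apply: tC_nth. Qed.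

Lemma disc_bc k (f g : {mpoly C[3]}) : disc (bc k f) (bc k g) = bc k (disc f g).
Proof. rewrite /disc /bc rmorphD !rmorphM !rmorph_nat. by rewrite !exprS !expr0 !mulr1. Qed.

End S.


Lemma wC_vs M : wC M vs = (U_(ss M) + \sum_(q < M.+1) U_(ev M q) *+ q)%MM.
Proof. by []. Qed.
Lemma wC_vt M : wC M vt = U_(tt_ M)%MM.
Proof. by rewrite /wC /= val_vt. Qed.
Lemma wC_vu M : wC M vu = (\sum_(q < M.+1) U_(ev M q))%MM.
Proof. by rewrite /wC /= val_vu. Qed.
Lemma wB_vs k : wB k vs = U_(vs)%MM. Proof. by []. Qed.
Lemma wB_vt k : wB k vt = U_(vt)%MM. Proof. by rewrite /wB /= val_vt. Qed.
Lemma wB_vu k : wB k vu = (U_(vu) *+ k)%MM. Proof. by rewrite /wB /= val_vu. Qed.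

Lemma eqordE n (a b : 'I_n) : (a == b) = (nat_of_ord a == nat_of_ord b).
Proof. by []. Qed.

Lemma imgC_ev M (m : 'X_{1..3}) q : (q <= M)%N ->
  (img (wC M) m : 'X_{1..M.+3}) (ev M q) = (q * m vs + m vu)%N.
Proof.
move=> Hq; rewrite imgE sum3 wC_vs wC_vt wC_vu mnmDE !mnm_sumE !mnm1E.
under eq_bigr => x _ do rewrite mulmnE mnm1E eqordE (@val_ev M x (ltn_ord x)) (@val_ev M q Hq) !eqSS.
under [X in (_ + _ + X * _)%N]eq_bigr => x _ do rewrite mnm1E eqordE (@val_ev M x (ltn_ord x)) (@val_ev M q Hq) !eqSS.
rewrite eqordE (@val_ev M q Hq) eqordE val_tt (@val_ev M q Hq) /= add0n mul0n addn0.
have H1 : (\sum_(x < M.+1) (((x : nat) == q) * x) = q)%N by exact: (@sum_delta M q (fun x => x) Hq).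
have H2 : (\sum_(x < M.+1) (((x : nat) == q) : nat) = 1)%N.
  have := @sum_delta M q (fun _ => 1%N) Hq; by under eq_bigr => x _ do rewrite muln1.
rewrite H1 H2.
by rewrite mul1n mulnC.
Qed.

Lemma imgC_ss M (m : 'X_{1..3}) :
  (img (wC M) m : 'X_{1..M.+3}) (ss M) = m vs.
Proof.
rewrite imgE sum3 wC_vs wC_vt wC_vu mnmDE !mnm_sumE !mnm1E.
rewrite !sum_zero ?eqxx ?eqordE ?val_tt /= ?add0n ?addn0 ?mul0n ?mul1n ?addn0 //.
- by move=> x; rewrite mnm1E eqordE (@val_ev M x (ltn_ord x)).
- by move=> x; rewrite mulmnE mnm1E eqordE (@val_ev M x (ltn_ord x)).
Qed.

Lemma imgC_tt M (m : 'X_{1..3}) :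
  (img (wC M) m : 'X_{1..M.+3}) (tt_ M) = m vt.
Proof.
rewrite imgE sum3 wC_vs wC_vt wC_vu mnmDE !mnm_sumE !mnm1E.
rewrite !sum_zero ?eqxx ?eqordE ?val_tt /= ?add0n ?addn0 ?mul0n ?mul1n ?addn0 //.
- by move=> x; rewrite mnm1E eqordE (@val_ev M x (ltn_ord x)) val_tt.
- by move=> x; rewrite mulmnE mnm1E eqordE (@val_ev M x (ltn_ord x)) val_tt.
Qed.

Lemma imgB_vs k (m : 'X_{1..3}) : (img (wB k) m : 'X_{1..3}) vs = m vs.
Proof.
rewrite imgE sum3 wB_vs wB_vt wB_vu ?mulmnE !mnm1E !eqordE ?val_vt ?val_vu /=; lia.
Qed.
Lemma imgB_vt k (m : 'X_{1..3}) : (img (wB k) m : 'X_{1..3}) vt = m vt.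
Proof.
rewrite imgE sum3 wB_vs wB_vt wB_vu ?mulmnE !mnm1E !eqordE ?val_vt ?val_vu /=; lia.
Qed.
Lemma imgB_vu k (m : 'X_{1..3}) : (img (wB k) m : 'X_{1..3}) vu = (k * m vu)%N.
Proof.
rewrite imgE sum3 wB_vs wB_vt wB_vu ?mulmnE !mnm1E !eqordE ?val_vt ?val_vu /=; lia.
Qed.

Lemma eq3 (m1 m2 : 'X_{1..3}) : m1 vs = m2 vs -> m1 vt = m2 vt -> m1 vu = m2 vu -> m1 = m2.
Proof. by move=> H1 H2 H3; apply/mnmP => i; case: (ord3 i) => ->. Qed.

Lemma imgC_inj M : injective (img (wC M)).
Proof.
move=> m1 m2 E; have E1 := congr1 (fun x : 'X_{1..M.+3} => x (ss M)) E.
have E2 := congr1 (fun x : 'X_{1..M.+3} => x (tt_ M)) E.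
have E3 := congr1 (fun x : 'X_{1..M.+3} => x (ev M 0)) E.
rewrite /= !imgC_ss in E1; rewrite /= !imgC_tt in E2; rewrite /= !imgC_ev // in E3.
by apply: eq3.
Qed.

Lemma imgCB_inj M k : (0 < k)%N -> injective (fun m => img (wC M) (img (wB k) m)).
Proof.
move=> Hk m1 m2 /imgC_inj E; have E1 := congr1 (fun x : 'X_{1..3} => x vs) E.
have E2 := congr1 (fun x : 'X_{1..3} => x vt) E.
have E3 := congr1 (fun x : 'X_{1..3} => x vu) E.
rewrite /= !imgB_vs in E1; rewrite /= !imgB_vt in E2; rewrite /= !imgB_vu in E3.
apply: eq3 => //; move/eqP: E3; rewrite eqn_mul2l => /orP [/eqP Hk0|/eqP //].
by rewrite Hk0 in Hk.
Qed.


Section S4.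
Variable C : numClosedFieldType.

Lemma sf_sumform M (D D' : {mpoly C[3]}) (G : 'X_{1..3} -> 'X_{1..M.+3}) p :
  injective G -> (p < M)%N -> chain_num M D' = sumform D G ->
  special_fiber M D' p =
  all (fun m => (seqmin [seq (G x : 'X_{1..M.+3}) (ev M p) | x <- msupp D] < (G m : 'X_{1..M.+3}) (ev M p))
            || (seqmin [seq (G x : 'X_{1..M.+3}) (ev M p.+1) | x <- msupp D] < (G m : 'X_{1..M.+3}) (ev M p.+1)))%N
      (msupp D).
Proof.
move=> injG Hp HN.
rewrite /special_fiber /dprime /=.
set N := chain_num M D'.
set V := [multinom _ | i < _].
have -> : (\sum_(mon <- msupp N) N@_mon *: 'X_[(mon - V)%MM]) = sumform N (fun mon => (mon - V)%MM) by [].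
have leV : forall mon, mon \in msupp N -> (V <= mon)%MM.
  move=> mon Hm; apply/mnm_lepP => i; rewrite /V mnmE; case: ifP => // _.
  by rewrite /mval; apply: seqmin_le; apply: map_f.
have injV : {in msupp N &, injective (fun mon => (mon - V)%MM)}.
  move=> m1 m2 H1 H2 /= E; by rewrite -(submK (leV _ H1)) E submK // leV.
have HV q : (q <= M)%N -> V (ev M q) = seqmin [seq (G x : 'X_{1..M.+3}) (ev M q) | x <- msupp D].
  move=> Hq; rewrite /V mnmE val_ev //= /N HN mval_sumform //; exact: in2W injG.
have HS : msupp N =i map G (msupp D).
  by rewrite /N HN; apply: mem_sumform; exact: in2W injG.
rewrite (eq_all_r (@mem_sumform _ _ _ _ _ injV)) all_map (eq_all_r HS) all_map.
apply: eq_all => mon /=; rewrite !mnmBE !subn_gt0 !HV //; exact: ltnW.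
Qed.
End S4.


Lemma key (T : eqType) (s : seq T) (a c : T -> nat) p k r x0 :
  x0 \in s -> seqmin [seq (p * a x + c x)%N | x <- s] = (p * a x0 + c x0)%N ->
  seqmin [seq (p.+1 * a x + c x)%N | x <- s] = (p.+1 * a x0 + c x0)%N -> (r <= k)%N ->
  seqmin [seq ((k * p + r) * a x + k * c x)%N | x <- s] = ((k * p + r) * a x0 + k * c x0)%N /\
  ((k * p + r) * a x0 + k * c x0 = (k - r) * (p * a x0 + c x0) + r * (p.+1 * a x0 + c x0))%N.
Proof.
move=> Hx0 E1 E2 Hr.
have id x : ((k * p + r) * a x + k * c x = (k - r) * (p * a x + c x) + r * (p.+1 * a x + c x))%N.
  have Hk := subnK Hr; set d := (k - r)%N in Hk *; rewrite -Hk; nia.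
split; last exact: id.
apply: seqmin_char; first by apply/mapP; exists x0.
move=> y /mapP [x Hx ->]; rewrite !id; apply: leq_add; apply: leq_mul => //.
  by rewrite -E1; apply: seqmin_le; apply/mapP; exists x.
by rewrite -E2; apply: seqmin_le; apply/mapP; exists x.
Qed.

Lemma listC M (s : seq 'X_{1..3}) q : (q <= M)%N ->
  [seq (img (wC M) x : 'X_{1..M.+3}) (ev M q) | x : 'X_{1..3} <- s] = [seq (q * x vs + x vu)%N | x : 'X_{1..3} <- s].
Proof. by move=> Hq; apply: eq_map => x; exact: imgC_ev. Qed.

Lemma compB M k (m : 'X_{1..3}) q : (q <= M)%N ->
  (img (wC M) (img (wB k) m) : 'X_{1..M.+3}) (ev M q) = (q * m vs + k * m vu)%N.
Proof. by move=> Hq; rewrite imgC_ev // imgB_vs imgB_vu. Qed.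

Lemma listB M k (s : seq 'X_{1..3}) q : (q <= M)%N ->
  [seq (img (wC M) (img (wB k) x) : 'X_{1..M.+3}) (ev M q) | x : 'X_{1..3} <- s] =
  [seq (q * x vs + k * x vu)%N | x : 'X_{1..3} <- s].
Proof. by move=> Hq; apply: eq_map => x; exact: compB. Qed.

Theorem lemma1 (C : numClosedFieldType) (f g : {mpoly C[3]}) (P p : nat) :
  homog_st f 8 -> homog_st g 12 ->
  ~ (s_ord_ge f 4 /\ s_ord_ge g 6) ->
  (forall l : nat, (0 < l)%N -> class14 (bc l f) (bc l g)) ->
  Pcond f g P -> (forall m : nat, (m < P)%N -> ~ Pcond f g m) ->
  ((exists j, (j < 4)%N /\ coef_nz f j /\ cord 4 P f j = 0) \/
   (exists j, (j < 6)%N /\ coef_nz g j /\ cord 6 P g j = 0)) ->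
  (p < P)%N ->
  ~~ special_fiber P (disc f g) p ->
  forall k : nat, (0 < k)%N ->
    (forall r : nat, (r <= k)%N ->
       nord (k * P) (disc (bc k f) (bc k g)) (k * p + r) =
         (k - r)%:Z * nord P (disc f g) p + r%:Z * nord P (disc f g) p.+1) /\
    (forall pb : nat, (k * p <= pb < k * p.+1)%N ->
       ~~ special_fiber (k * P) (disc (bc k f) (bc k g)) pb).
Proof.
move=> _ _ _ _ _ _ _ Hp Hnsf k Hk.
rewrite disc_bc.
set D := disc f g in Hnsf *.
have HC := @chain_sf _ P D.
have HB := @chain_bc_sf _ (k * P) k D.
move: Hnsf; rewrite (@sf_sumform _ _ _ _ _ _ (imgC_inj P) Hp HC) => /allPn [m0 Hm0].
rewrite negb_or -!leqNgt => /andP [h1 h2].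
have Hp' : (p <= P)%N := ltnW Hp.
rewrite !listC ?imgC_ev // in h1 h2.
have E1 : seqmin [seq (p * x vs + x vu)%N | x : 'X_{1..3} <- msupp D] = (p * m0 vs + m0 vu)%N.
  by apply/eqP; rewrite eqn_leq h1 seqmin_le //; apply/mapP; exists m0.
have E2 : seqmin [seq (p.+1 * x vs + x vu)%N | x : 'X_{1..3} <- msupp D] = (p.+1 * m0 vs + m0 vu)%N.
  by apply/eqP; rewrite eqn_leq h2 seqmin_le //; apply/mapP; exists m0.
have Km r := @key _ (msupp D) (fun x : 'X_{1..3} => x vs) (fun x : 'X_{1..3} => x vu) p k r m0 Hm0 E1 E2.
have injB : {in msupp D &, injective (fun m => img (wC (k * P)) (img (wB k) m))}.
  move=> x y _ _; exact: (imgCB_inj (k * P) k Hk).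
split.
  move=> r Hr.
  have Hq : (k * p + r <= k * P)%N by nia.
  rewrite /nord /vord HB mval_sumform // listB //.
  case: (Km r Hr) => -> ->.
  rewrite HC !mval_sumform; try exact: in2W (imgC_inj P).
  rewrite !listC ?E1 ?E2 //.
  set A := (p * m0 vs + m0 vu)%N; set B := (p.+1 * m0 vs + m0 vu)%N.
  have Hk' := subnK Hr; set d := (k - r)%N in Hk' *; rewrite -Hk'.
  lia.
move=> pb /andP [Hpb1 Hpb2].
have Hpb : (pb < k * P)%N by nia.
pose r := (pb - k * p)%N.
have Hpbr : pb = (k * p + r)%N by rewrite /r; lia.
have Hrk : (r < k)%N by rewrite /r; lia.
rewrite (@sf_sumform _ _ _ _ _ _ (imgCB_inj (k * P) k Hk) Hpb HB); apply/allPn; exists m0 => //.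
rewrite negb_or -!leqNgt !listB ?compB //; try nia.
rewrite Hpbr -addnS.
case: (Km r (ltnW Hrk)) => -> _; case: (Km r.+1 Hrk) => -> _.
by rewrite !leqnn.
Qed.
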